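(* Let $n\ge 2$ and $b\ge 2$ be integers and $r\ge 0$. The probability that the base-$b$ carries chain for adding $n$ numbers, started at $\kappa_0=0$, is in state $j$ after $r$ steps equals the probability that a random permutation of $S_n$ with law $Q_{b^r}$ (the law of the permutation obtained by performing $r$ successive independent $b$-shuffles starting from the identity) has exactly $j$ descents. In formulas, for $0\le j\le n-1$, $$P_b^r(0,j)=\sum_{\sigma\in S_n:\ d(\sigma)=j} Q_{b^r}(\sigma).$$
   Context: For $\sigma\in S_n$, $\sigma$ has a descent at $i$ ($1\le i\le n-1$) if $\sigma(i+1)<\sigma(i)$; $d(\sigma)$ is the number of descents. Binomial convention: for integers $m$ and $n\ge0$, $\binom{m}{n}=\frac{m(m-1)\cdots(m-n+1)}{n!}$ if $m\ge n$ and $\binom{m}{n}=0$ if $m<n$ (including negative $m$). The $b$-shuffle measure on $S_n$ is $Q_b(\sigma)=\binom{n+b-d(\sigma^{-1})-1}{n}/b^n$ (this is the law of the permutation produced by one $b$-shuffle of the Gilbert–Shannon–Reeds type: cut into $b$ packets multinomially and riffle dropping cards with probability proportional to packet size). It is known that performing an $a$-shuffle followed by a $b$-shuffle gives the law $Q_{ab}$, so $r$ successive $b$-shuffles from the identity yield law $Q_{b^r}$. The base-$b$ carries chain for adding $n$ numbers is the Markov chain $\kappa_0=0,\kappa_1,\kappa_2,\dots$ on $\{0,1,\dots,n-1\}$ given by $\kappa_{t+1}=\lfloor(\kappa_t+X_{t+1,1}+\dots+X_{t+1,n})/b\rfloor$, where the $X_{t,k}$ are i.i.d. uniform on $\{0,1,\dots,b-1\}$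 (the carries when $n$ random base-$b$ integers are added column by column). Its transition matrix is $P_b(i,j)=b^{-n}\sum_{l=0}^{j-\lfloor i/b\rfloor}(-1)^l\binom{n+1}{l}\binom{n-1-i+(j+1-l)b}{n}$, and $P_b^r$ denotes its $r$-step transition matrix. *)

(* Defs.v *)
From HB Require Import structures.
From mathcomp Require Import all_boot all_order all_algebra all_fingroup.
Set Implicit Arguments. Unset Strict Implicit. Unset Printing Implicit Defensive.
Import Order.TTheory GRing.Theory Num.Theory.
Local Open Scope ring_scope.

(* Binomial coefficient with the paper's convention: for m : int, k : nat,
   binom m k = m(m-1)...(m-k+1)/k! if m >= k, and 0 if m < k
   (in particular 0 for negative m). *)
Definition gbinom (m : int) (k : nat) : rat :=
  if (k%:Z <= m) then ('C(`|m|%N, k))%:R else 0.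

Definition descents (n : nat) (s : 'S_n) : nat :=
  #|[set i : 'I_n | [exists j : 'I_n, (val j == (val i).+1)%N && (s j < s i)%N]]|.

Definition shuffleQ (n b : nat) (s : 'S_n) : rat :=
  gbinom ((n + b)%:Z - (descents (s^-1)%g)%:Z - 1) n / (b ^ n)%:R.

Definition carriesP (n b i j : nat) : rat :=
  #|[set x : {ffun 'I_n -> 'I_b} | ((i + \sum_(k < n) val (x k)) %/ b == j)%N]|%:R
    / (b ^ n)%:R.

Fixpoint carriesPr (n b r i j : nat) : rat :=
  match r with
  | 0 => ((i == j) : nat)%:R
  | r'.+1 => \sum_(k < n) carriesPr n b r' i k * carriesP n b k j
  end.

(* Main.v *)
Require Import Defs.
From HB Require Import structures.
From mathcomp Require Import all_boot all_order all_algebra all_fingroup.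
From Stdlib Require Import Lia.
Import Order.TTheory GRing.Theory Num.Theory.

Section Helpers.
Local Open Scope nat_scope.

Lemma card_bij (T U : finType) (A : pred T) (B : pred U) (f : T -> U) (g : U -> T) :
  (forall x, A x -> B (f x)) -> (forall y, B y -> A (g y)) ->
  (forall x, A x -> g (f x) = x) -> (forall y, B y -> f (g y) = y) ->
  #|[set x | A x]| = #|[set y | B y]|.
Proof.
move=> fAB gBA gf fg.
have ->: [set y | B y] = f @: [set x | A x].
  apply/setP=> y; rewrite inE; apply/idP/imsetP.
    by move=> By; exists (g y); rewrite ?inE ?fg ?gBA.
  by case=> x; rewrite inE => Ax ->; apply: fAB.
rewrite card_in_imset //= => x1 x2; rewrite !inE => A1 A2 E.
by rewrite -(gf _ A1) E gf.
Qed.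

Lemma card_setsum (T : finType) (P : pred T) : #|[set x | P x]| = \sum_x (P x : nat).
Proof.
rewrite -sum1_card big_mkcond /=; apply: eq_bigr => x _.
by rewrite inE; case: (P x).
Qed.

Definition cnt (n a i j : nat) :=
  #|[set x : {ffun 'I_n -> 'I_a} | ((i + \sum_(k < n) val (x k)) %/ a == j)]|.

Lemma sum_bound n B (x : {ffun 'I_n -> 'I_B}) : \sum_(k < n) val (x k) + n <= n * B.
Proof.
have E : \sum_(k < n) 1 = n by rewrite sum1_card card_ord.
rewrite -[X in _ + X <= _]E -[X in _ <= X * _]E big_distrl /= -big_split /=.
apply: leq_sum => k _; rewrite addn1 mul1n; exact: ltn_ord.
Qed.

Section Split.
Variables (B b : nat) (HB : 0 < B).

Lemma div_lt (X : 'I_(B * b)) : X %/ B < b.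
Proof. by rewrite ltn_divLR // [b * B]mulnC. Qed.

Lemma comb_lt (x : 'I_B) (z : 'I_b) : x + B * z < B * b.
Proof.
have : x + B * z < B * z.+1 by rewrite mulnS ltn_add2r.
move/leq_trans; apply; rewrite leq_mul2l; apply/orP; right; exact: ltn_ord.
Qed.

Definition splitf (n : nat) (X : {ffun 'I_n -> 'I_(B * b)}) :=
  ([ffun k => Ordinal (ltn_pmod (X k) HB)], [ffun k => Ordinal (div_lt (X k))]).

Definition combf (n : nat) (p : {ffun 'I_n -> 'I_B} * {ffun 'I_n -> 'I_b}) :
  {ffun 'I_n -> 'I_(B * b)} :=
  [ffun k => Ordinal (comb_lt (p.1 k) (p.2 k))].

Lemma combfK n : cancel (@splitf n) (@combf n).
Proof.
move=> X; apply/ffunP=> k; rewrite !ffunE; apply/val_inj => /=.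
by rewrite (mulnC B (_ %/ _)) addnC -divn_eq.
Qed.

Lemma splitfK n : cancel (@combf n) (@splitf n).
Proof.
case=> x z; congr pair; apply/ffunP=> k; rewrite !ffunE; apply/val_inj => /=;
  rewrite /= (mulnC B (val (z k))).
  by rewrite addnC modnMDl modn_small.
by rewrite addnC divnMDl // divn_small ?addn0.
Qed.

Lemma sum_combf n p : \sum_(k < n) val (@combf n p k) =
  \sum_(k < n) val (p.1 k) + B * \sum_(k < n) val (p.2 k).
Proof.
rewrite big_distrr -big_split /=; apply: eq_bigr => k _; by rewrite ffunE.
Qed.

End Split.


Lemma divDM u v B : 0 < B -> (u + B * v) %/ B = u %/ B + v.
Proof. by move=> HB; rewrite addnC mulnC divnMDl // addnC. Qed.

Lemma stepA_nat n B b i j : 0 < B -> 0 < b -> i < n ->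
  cnt n (B * b) i j = \sum_(k < n) cnt n B i k * cnt n b k j.
Proof.
move=> HB Hb lt_in.
rewrite /cnt (@card_bij _ _ _
   (fun p : {ffun 'I_n -> 'I_B} * {ffun 'I_n -> 'I_b} =>
      (((i + \sum_(k < n) val (p.1 k)) %/ B + \sum_(k < n) val (p.2 k)) %/ b == j))
   (@splitf B b HB n) (@combf B b n)); first last.
- by move=> p _; rewrite splitfK.
- by move=> X _; rewrite combfK.
- by move=> p; rewrite sum_combf divnMA addnA divDM.
- by move=> X; rewrite -{1}(@combfK B b HB n X) sum_combf divnMA addnA divDM.
rewrite card_setsum -(pair_bigA _ (fun (x : {ffun 'I_n -> 'I_B}) (z : {ffun 'I_n -> 'I_b}) =>
  ((((i + \sum_(k < n) val (x k)) %/ B + \sum_(k < n) val (z k)) %/ b == j) : nat))) /=.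
case: n lt_in => // n' lt_in.
rewrite (partition_big (fun x : {ffun 'I_n'.+1 -> 'I_B} =>
            (inord ((i + \sum_(k < n'.+1) val (x k)) %/ B) : 'I_n'.+1)) xpredT) //=.
apply: eq_bigr => k _.
have key_lt (x : {ffun 'I_n'.+1 -> 'I_B}) : (i + \sum_(k < n'.+1) val (x k)) %/ B < n'.+1.
  rewrite ltn_divLR //; apply: (leq_trans _ (sum_bound _ _ x)).
  by rewrite addnC ltn_add2l.
have Ekey (x : {ffun 'I_n'.+1 -> 'I_B}) :
    (inord ((i + \sum_(k0 < n'.+1) val (x k0)) %/ B) == k) =
    ((i + \sum_(k0 < n'.+1) val (x k0)) %/ B == k).
  by rewrite -val_eqE /= inordK // key_lt.
rewrite (eq_bigr (fun=> 1 * cnt n'.+1 b k j)); last first.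
  move=> x /eqP Ek; rewrite mul1n /cnt card_setsum; apply: eq_bigr => z _.
  by rewrite -Ek inordK // key_lt.
rewrite -big_distrl /= sum1_card; congr (_ * _).
apply: eq_card => x; rewrite !inE -Ekey. by [].
Qed.

End Helpers.

Section StepB.
Local Open Scope nat_scope.

Definition desf (n a : nat) (y : {ffun 'I_n -> 'I_a}) :=
  #|[set i : 'I_n | [exists j : 'I_n, (val j == (val i).+1) && (y j < y i)]]|.



Arguments desf {n a} y.

Lemma card_desc n' (g : 'I_n'.+1 -> nat) :
  #|[set i : 'I_n'.+1 | [exists j : 'I_n'.+1, (val j == (val i).+1) && (g j < g i)]]|
  = \sum_(0 <= q < n') (g (inord q.+1) < g (inord q)).
Proof.
rewrite card_setsum big_ord_recr /=.
have -> : [exists j : 'I_n'.+1, (val j == (@ord_max n').+1) && (g j < g ord_max)] = false.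
  apply/existsP => -[j /andP [/eqP E _]].
  by move: (ltn_ord j); rewrite E /= ltnn.
rewrite addn0 big_mkord; apply: eq_bigr => i _.
have Ew : widen_ord (leqnSn n') i = inord i by apply/val_inj; rewrite /= inordK // ltnS ltnW.
rewrite Ew; congr (nat_of_bool _); apply/existsP/idP.
  case=> j /andP [/eqP E H]; suff -> : inord i.+1 = j by [].
  by apply/val_inj; rewrite /= E inordK // ltnS.
move=> H; exists (inord i.+1); rewrite H andbT inordK ?ltnS //.
Qed.

Lemma carry u v a : u < a -> v < a -> (u + v) %/ a = ((u + v) %% a < u).
Proof.
move=> ua va; case: (ltnP (u + v) a) => H.
  by rewrite divn_small // modn_small // ltnNge leq_addr.
have E : u + v = 1 * a + (u + v - a) by rewrite mul1n subnKC.
have wa : u + v - a < a.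
  rewrite ltn_subLR //; apply: (@leq_trans (a + v)).
    by rewrite -addSn leq_add2r.
  by rewrite leq_add2l ltnW.
have a0 : 0 < a by apply: leq_ltn_trans ua.
rewrite E divnMDl // modnMDl divn_small // modn_small //.
by rewrite ltn_subLR // [u + v]addnC ltn_add2r va.
Qed.

Variables (n' a : nat) (Ha : 0 < a).
Local Notation n := n'.+1.
Implicit Types x y : {ffun 'I_n -> 'I_a}.

Definition xv (x : {ffun 'I_n -> 'I_a}) p := val (x (inord p)).
Definition S (x : {ffun 'I_n -> 'I_a}) p := \sum_(0 <= q < p.+1) xv x q.
Definition Phi (x : {ffun 'I_n -> 'I_a}) : {ffun 'I_n -> 'I_a} := [ffun k : 'I_n => Ordinal (ltn_pmod (S x k) Ha)].
Definition yprev (y : {ffun 'I_n -> 'I_a}) p := if p is p'.+1 then xv y p' else 0.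
Definition Psi (y : {ffun 'I_n -> 'I_a}) : {ffun 'I_n -> 'I_a} :=
  [ffun k : 'I_n => Ordinal (ltn_pmod (xv y k + a - yprev y k) Ha)].

Lemma sumS x : \sum_(k < n) val (x k) = S x n'.
Proof. by rewrite /S big_mkord; apply: eq_bigr => k _; rewrite /xv inord_val. Qed.

Lemma xv_Phi x p : p <= n' -> xv (Phi x) p = S x p %% a.
Proof. by move=> Hp; rewrite /xv ffunE /= inordK. Qed.

Lemma xv_Psi y p : p <= n' -> xv (Psi y) p = (xv y p + a - yprev y p) %% a.
Proof. by move=> Hp; rewrite /xv ffunE /= inordK. Qed.

Lemma xv_lt x p : xv x p < a.
Proof. exact: ltn_ord. Qed.

Lemma PsiK : cancel Phi Psi.
Proof.
move=> x; apply/ffunP => k; apply/val_inj; rewrite ffunE /=.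
have Hk : k <= n' by rewrite -ltnS.
rewrite xv_Phi //.
have -> : val (x k) = xv x k by rewrite /xv inord_val.
case: (val k) Hk => [|p] Hp /=.
  by rewrite subn0 modnDr /S big_nat1 !modn_small ?xv_lt.
rewrite xv_Phi ?(ltnW Hp) //.
rewrite /S big_nat_recr //= -/(S x p).
rewrite -[RHS](@modn_small (xv x p.+1) a) ?xv_lt //.
apply/eqP; rewrite -(eqn_modDr (S x p %% a)) subnK; last first.
  by rewrite ltnW // ltn_addl // ltn_pmod.
by rewrite modnDr modn_mod modnDmr addnC.
Qed.

Lemma S_Psi y p : p <= n' -> S (Psi y) p %% a = xv y p.
Proof.
elim: p => [|p IH] Hp.
  by rewrite /S big_nat1 xv_Psi //= subn0 modnDr !modn_small ?xv_lt.
rewrite /S big_nat_recr //= -/(S (Psi y) p) -modnDml IH ?(ltnW Hp) //.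
rewrite xv_Psi //= modnDmr addnC subnK; last exact: (leq_trans (ltnW (xv_lt y p)) (leq_addl _ _)).
by rewrite modnDr modn_small // xv_lt.
Qed.

Lemma PhiK : cancel Psi Phi.
Proof.
move=> y; apply/ffunP => k; apply: val_inj; rewrite [Phi _ _]ffunE.
change (S (Psi y) k %% a = val (y k)).
by rewrite (S_Psi y k (_ : k <= n')) -1?ltnS // /xv inord_val.
Qed.

Lemma S_div x p : S x p %/ a = \sum_(0 <= q < p) (S x q.+1 %% a < S x q %% a).
Proof.
elim: p => [|p IH].
  by rewrite big_geq // /S big_nat1 divn_small ?xv_lt.
have SS : S x p.+1 = S x p + xv x p.+1 by rewrite /S big_nat_recr.
rewrite big_nat_recr //= -IH SS.
rewrite {1}(divn_eq (S x p) a) -addnA divnMDl // carry ?ltn_pmod ?xv_lt //.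
by rewrite modnDml.
Qed.

Lemma desf_Phi x : desf (Phi x) = S x n' %/ a.
Proof.
rewrite /desf (card_desc n' (fun k : 'I_n => nat_of_ord (Phi x k))) S_div.
apply: eq_big_nat => q /andP [_ Hq].
by rewrite -!/(xv (Phi x) _) !xv_Phi // ltnW.
Qed.

Lemma stepB j : cnt n a 0 j = #|[set y : {ffun 'I_n -> 'I_a} | desf y == j]|.
Proof.
rewrite /cnt (@card_bij _ _ _ (fun y : {ffun 'I_n -> 'I_a} => desf y == j) Phi Psi).
- by [].
- by move=> x; rewrite add0n sumS desf_Phi.
- by move=> y; rewrite -{1}(PhiK y) desf_Phi add0n sumS.
- by move=> x _; rewrite PsiK.
- by move=> y _; rewrite PhiK.
Qed.

End StepB.
Arguments desf {n a} y.

Section Std.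
Local Open Scope nat_scope.
Variables (n a : nat).
Implicit Types (y : {ffun 'I_n -> 'I_a}) (i k l : 'I_n).

Definition kl y k i :=
  (val (y k) < val (y i)) || ((val (y k) == val (y i)) && (val k < val i)).

Lemma kl_irr y i : kl y i i = false.
Proof. by rewrite /kl !ltnn andbF. Qed.

Lemma kl_trans y k i l : kl y k i -> kl y i l -> kl y k l.
Proof.
rewrite /kl => /orP [H1|/andP [/eqP E1 H1]] /orP [H2|/andP [/eqP E2 H2]].
- by rewrite (ltn_trans H1 H2).
- by rewrite -E2 H1.
- by rewrite E1 H2.
- by rewrite E1 E2 eqxx (ltn_trans H1 H2) orbT.
Qed.

Arguments kl_trans [y k i l].

Lemma kl_total y k i : k != i -> kl y k i || kl y i k.
Proof.
move=> ne; rewrite /kl; case: (ltngtP (y k) (y i)) => //= E.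
case: (ltngtP k i) => // /val_inj E'.
by rewrite E' eqxx in ne.
Qed.

Lemma kl_asym y k i : kl y k i -> kl y i k = false.
Proof.
move=> H; apply/negP => H'; have := kl_trans H H'; by rewrite kl_irr.
Qed.

Definition stdf y i := #|[set k | kl y k i]|.

Lemma stdf_lt y i : stdf y i < n.
Proof.
have : stdf y i <= #|[set~ i]|.
  apply: subset_leq_card; apply/subsetP => k; rewrite !inE; apply: contraTN.
  by move/eqP ->; rewrite kl_irr.
rewrite cardsC1 card_ord => H; apply: leq_ltn_trans H _.
by case: n i => [[]|m] //.
Qed.

Lemma stdf_mono y k i : kl y k i -> stdf y k < stdf y i.
Proof.
move=> H; apply: proper_card; apply/properP; split.
  by apply/subsetP => l; rewrite !inE => H'; apply: kl_trans H' H.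
by exists k; rewrite !inE ?kl_irr.
Qed.

Arguments stdf_mono [y k i].

Definition stdo y i : 'I_n := Ordinal (stdf_lt y i).

Lemma stdo_inj y : injective (stdo y).
Proof.
move=> i k E; apply/eqP; apply: contraT => ne.
have := kl_total y _ _ ne; case/orP => /stdf_mono;
  by move: E => /(congr1 val) /= ->; rewrite ltnn.
Qed.

Definition std y : 'S_n := perm (@stdo_inj y).

Lemma std_lt y k i : (std y k < std y i) = kl y k i.
Proof.
rewrite !permE /=; apply/idP/idP; last exact: stdf_mono.
move=> H; have [E|ne] := eqVneq k i; first by rewrite E ltnn in H.
case/orP: (kl_total y _ _ ne) => // /stdf_mono H'.
by have := ltn_trans H H'; rewrite ltnn.
Qed.

Lemma desf_std y : desf y = descents (std y).
Proof.
rewrite /desf /descents; apply: eq_card => i; rewrite !inE.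
apply/existsP/existsP => -[j /andP [/eqP E H]]; exists j; rewrite E eqxx /=.
  by rewrite std_lt /kl H.
move: H; rewrite std_lt /kl E (ltnNge (val i).+1 (val i)) leqnSn andbF orbF; exact.
Qed.

End Std.
Arguments std {n a} y.
Arguments kl {n a} y k i.
Arguments std_lt {n a} y k i.
Arguments kl_trans {n a} [y k i l].
Arguments kl_asym {n a} [y k i].
Arguments kl_irr {n a} y i.

Lemma stepC n' a j :
  #|[set y : {ffun 'I_n'.+1 -> 'I_a} | desf y == j]| =
  \sum_(s : 'S_n'.+1 | descents s == j) #|[set y : {ffun 'I_n'.+1 -> 'I_a} | std y == s]|.
Proof.
rewrite card_setsum -big_mkcond /=.
rewrite (partition_big (@std n'.+1 a) (fun s => descents s == j)); last first.
  by move=> y; rewrite desf_std.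
apply: eq_bigr => s Hs; rewrite card_setsum big_mkcond /=; apply: eq_bigr => y _.
rewrite desf_std; case: (std y =P s) => [E|]; last by rewrite andbF.
by rewrite E Hs.
Qed.

Ltac nlia :=
  repeat match goal with H : is_true (leq _ _) |- _ => move/ssrnat.leP: H => H end;
  repeat match goal with
    | H : context [addn] |- _ => rewrite -plusE in H
    | H : context [subn] |- _ => rewrite -minusE in H
    | H : context [muln] |- _ => rewrite -multE in H end;
  try apply/ssrnat.leP; rewrite -?plusE -?minusE -?multE; lia.

Ltac nlia_dbg_unused :=
  repeat match goal with H : is_true (leq _ _) |- _ => move/ssrnat.leP: H => H end;
  repeat match goal with
    | H : context [addn] |- _ => rewrite -plusE in H
    | H : context [subn] |- _ => rewrite -minusE in H
    | H : context [muln] |- _ => rewrite -multE in H end;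
  try apply/ssrnat.leP; rewrite -?plusE -?minusE -?multE.

Section StepD.
Local Open Scope nat_scope.
Variables (n' a' : nat) (sg : 'S_n'.+1).
Local Notation n := n'.+1.
Local Notation a := a'.+1.
Local Notation tau := (sg^-1)%g.

Definition tv p := nat_of_ord (tau (inord p : 'I_n)).
Definition dsc p := (p < n') && (tv p.+1 < tv p).
Definition sd p := \sum_(0 <= q < p) dsc q.
Definition dd := descents tau.

Lemma sdS p : sd p.+1 = sd p + dsc p.
Proof. by rewrite /sd big_nat_recr. Qed.

Lemma sd_le p : sd p <= p.
Proof.
elim: p => [|p IH]; first by rewrite /sd big_geq.
by rewrite sdS -addn1 leq_add // leq_b1.
Qed.

Lemma sd_n : sd n' = dd.
Proof.
rewrite /dd /descents (card_desc n' (fun k => nat_of_ord (tau k))) /sd.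
by apply: eq_big_nat => q /andP [_ Hq]; rewrite /dsc Hq.
Qed.

Lemma dd_le : dd <= n'.
Proof. rewrite -sd_n; exact: sd_le. Qed.

Implicit Types (y : {ffun 'I_n -> 'I_a}).

Definition fv y p := nat_of_ord (y (tau (inord p))).

Lemma fv_lt y p : fv y p <= a'.
Proof. by rewrite -ltnS ltn_ord. Qed.

Lemma tauK p : p <= n' -> nat_of_ord (sg (tau (inord p))) = p.
Proof. by move=> Hp; rewrite permKV inordK. Qed.

Lemma tau_sg i : tau (inord (nat_of_ord (sg i))) = i.
Proof. by rewrite inord_val permK. Qed.

Lemma kl_tau y p q : p <= n' -> q <= n' ->
  kl y (tau (inord p)) (tau (inord q)) =
  (fv y p < fv y q) || ((fv y p == fv y q) && (tv p < tv q)).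
Proof. by []. Qed.

Lemma tv_inj p q : p <= n' -> q <= n' -> tv p = tv q -> p = q.
Proof.
move=> Hp Hq /val_inj /perm_inj /(congr1 (@nat_of_ord _)); rewrite !inordK //.
Qed.

Definition cond y := forall p, p < n' -> fv y p + dsc p <= fv y p.+1.

Lemma card_lt (s : 'S_n) c : c <= n -> #|[set k | s k < c]| = c.
Proof.
move=> Hc.
rewrite (@card_bij _ _ _ (fun q : 'I_n => q < c) s (s^-1)%g); first last.
- by move=> q _; rewrite permKV.
- by move=> k _; rewrite permK.
- by move=> q; rewrite permKV.
- by [].
rewrite card_setsum -(big_mkord xpredT (fun q => nat_of_bool (q < c))) (big_cat_nat (leq0n c) Hc) /=.
rewrite (@eq_big_nat _ _ _ c n _ (fun=> 0)); last by move=> i /andP [H _]; rewrite ltnNge H.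
rewrite [X in _ + X]big1 // addn0 (@eq_big_nat _ _ _ 0 c _ (fun=> 1)); last by move=> i /andP [_ ->].
by rewrite sum_nat_const_nat subn0 muln1.
Qed.

Lemma D1 y : (std y == sg) <-> cond y.
Proof.
split.
  move/eqP => E p Hp.
  have := std_lt y (tau (inord p)) (tau (inord p.+1)).
  rewrite E !tauK ?(ltnW Hp) // ltnSn kl_tau ?(ltnW Hp) //.
  move/esym; case/orP => [H|/andP [/eqP E1 H]].
    by apply: leq_trans H; rewrite -addn1 leq_add2l leq_b1.
  by rewrite /dsc (ltnNge (tv p.+1)) (ltnW H) andbF addn0 E1.
move=> C.
have mono : {in (fun p => p <= n') &, {homo (fun p => tau (inord p) : 'I_n) :
   p q / p < q >-> kl y p q}}.
  apply: (@homo_ltn_in _ (fun p => p <= n') (fun p => tau (inord p) : 'I_n) (kl y)).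
  - by move=> k i l; apply: kl_trans.
  - move=> i j _ Hj k /andP [_ Hkj]; exact: (leq_trans (ltnW Hkj) Hj).
  move=> i Hi Hi1; rewrite /in_mem /= in Hi Hi1.
  rewrite kl_tau //; have := C i Hi1.
  case: (ltngtP (fv y i) (fv y i.+1)) => //= [Hlt|Heq].
    by move=> H; have := leq_trans (leq_addr _ _) H; rewrite leqNgt Hlt.
  move=> H.
  have Hd : dsc i = false.
    by apply/negbTE/negP => Hd; move: H; rewrite Hd Heq addn1 ltnn.
  move: Hd; rewrite /dsc Hi1 /= => /negbT; rewrite -leqNgt leq_eqVlt => /orP [/eqP E|] //.
  have := tv_inj i i.+1 Hi Hi1 E => H'.
  by move/eqP: H'; rewrite eqn_leq ltnn andbF.
have kl_iff k i : kl y k i = (sg k < sg i).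
  have Hk : sg k <= n' by rewrite -ltnS.
  have Hi : sg i <= n' by rewrite -ltnS.
  case: (ltngtP (sg k) (sg i)) => H.
  - by have := mono _ _ Hk Hi H; rewrite !tau_sg.
  - by have := mono _ _ Hi Hk H; rewrite !tau_sg => /kl_asym.
  have -> : k = i by apply: (@perm_inj _ sg); apply: val_inj.
  by rewrite kl_irr.
apply/eqP/permP => i; apply: val_inj; rewrite permE /= /stdf.
have -> : [set k | kl y k i] = [set k | sg k < sg i].
  by apply/setP => k; rewrite !inE kl_iff.
by rewrite card_lt // ltnW.
Qed.


Lemma mono_le (f : nat -> nat) N : (forall p, p < N -> f p <= f p.+1) ->
  forall p, p <= N -> f p <= f N.
Proof.
move=> H p Hp.
have key : forall k, p + k <= N -> f p <= f (p + k).
  elim=> [|k IH] Hk; first by rewrite addn0.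
  have Hk' : p + k < N by rewrite -addnS.
  apply: leq_trans (IH (ltnW Hk')) _; rewrite addnS; exact: H.
by have := key (N - p); rewrite subnKC //; apply.
Qed.

Local Notation m := (a' + n' - dd).

Definition tn (t : n.-tuple 'I_m.+1) p := nat_of_ord (tnth t (inord p)).
Definition hh y p := fv y p + p - sd p.
Definition PhiD y : n.-tuple 'I_m.+1 := [tuple (inord (hh y i) : 'I_m.+1) | i < n].
Definition FF (t : n.-tuple 'I_m.+1) p := tn t p + sd p - p.
Definition PsiD (t : n.-tuple 'I_m.+1) : {ffun 'I_n -> 'I_a} :=
  [ffun i => (inord (FF t (sg i)) : 'I_a)].

Lemma sortedE (t : n.-tuple 'I_m.+1) :
  sorted ltn (map val t) <-> (forall p, p < n' -> tn t p < tn t p.+1).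
Proof.
have E p : p < n -> nth 0 (map val t) p = tn t p.
  move=> Hp; rewrite (nth_map ord0) ?size_tuple // /tn (tnth_nth ord0) inordK //.
split.
  move/(sortedP 0) => H p Hp; rewrite -!E ?(ltnW Hp) //; first apply: H.
    by rewrite size_map size_tuple.
  by apply: ltn_trans Hp _.
move=> H; apply/(sortedP 0) => p; rewrite size_map size_tuple ltnS => Hp.
have H1 : p < n by rewrite ltnS ltnW.
have H2 : p.+1 < n by rewrite ltnS.
by rewrite (E _ H1) (E _ H2); exact: H.
Qed.

Lemma tn_lt t p : tn t p <= m.
Proof. by rewrite -ltnS ltn_ord. Qed.

Lemma tn_ge t : (forall p, p < n' -> tn t p < tn t p.+1) -> forall p, p <= n' -> p <= tn t p.
Proof.
move=> H; elim=> [|p IH] Hp //.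
by apply: leq_ltn_trans (IH (ltnW Hp)) (H p Hp).
Qed.

Lemma tn_PhiD y p : p <= n' -> hh y p <= m -> tn (PhiD y) p = hh y p.
Proof. by move=> Hp Hh; rewrite /tn tnth_mktuple !inordK. Qed.

Lemma hh_step y : cond y -> forall p, p < n' -> hh y p < hh y p.+1.
Proof.
move=> C p Hp; have := C p Hp; have := sdS p; have := sd_le p; have := sd_le p.+1.
have := leq_b1 (dsc p); rewrite /hh => h1 h2 h3 h4 h5; nlia.
Qed.

Lemma hh_bound y : cond y -> forall p, p <= n' -> hh y p <= m.
Proof.
move=> C p Hp; apply: leq_trans (mono_le (hh y) n' (fun q Hq => ltnW (hh_step y C q Hq)) p Hp) _.
have := fv_lt y n'; have := sd_n; have := dd_le; have := sd_le n'; rewrite /hh => h1 h2 h3 h4; nlia.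
Qed.

Lemma PhiD_sorted y : cond y -> sorted ltn (map val (PhiD y)).
Proof.
move=> C; apply/sortedE => p Hp.
rewrite !tn_PhiD ?hh_bound ?(ltnW Hp) //; exact: hh_step.
Qed.

Lemma PhiDK y : cond y -> PsiD (PhiD y) = y.
Proof.
move=> C; apply/ffunP => i; apply: val_inj; rewrite ffunE /FF.
have Hi : sg i <= n' by rewrite -ltnS.
rewrite tn_PhiD ?hh_bound // /hh.
have -> : fv y (sg i) = y i by rewrite /fv tau_sg.
have := sd_le (sg i) => Hs.
rewrite subnK ?addnK; first by rewrite inord_val.
by apply: leq_trans Hs (leq_addl _ _).
Qed.

Section Sorted.
Variable t : n.-tuple 'I_m.+1.
Hypothesis St : forall p, p < n' -> tn t p < tn t p.+1.

Lemma FF_step p : p < n' -> FF t p + dsc p <= FF t p.+1.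
Proof.
move=> Hp; have := St p Hp; have := tn_ge t St p (ltnW Hp); have := sdS p; have := sd_le p.
have := leq_b1 (dsc p); rewrite /FF => h1 h2 h3 h4 h5; nlia.
Qed.

Lemma FF_bound p : p <= n' -> FF t p <= a'.
Proof.
move=> Hp; apply: leq_trans (mono_le (FF t) n'
   (fun q Hq => leq_trans (leq_addr _ _) (FF_step q Hq)) p Hp) _.
have := tn_lt t n'; have := tn_ge t St n' (leqnn n'); have := sd_n; have := dd_le.
rewrite /FF => h1 h2 h3 h4; nlia.
Qed.

Lemma fv_PsiD p : p <= n' -> fv (PsiD t) p = FF t p.
Proof. by move=> Hp; rewrite /fv ffunE tauK // inordK // ltnS FF_bound. Qed.

Lemma PsiD_cond : cond (PsiD t).
Proof.
move=> p Hp; rewrite !fv_PsiD ?(ltnW Hp) //; exact: FF_step.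
Qed.

Lemma PsiDK : PhiD (PsiD t) = t.
Proof.
apply: eq_from_tnth => i; apply: val_inj; rewrite tnth_mktuple /=.
have Hi : i <= n' by rewrite -ltnS.
have E : hh (PsiD t) i = tn t i.
  rewrite /hh fv_PsiD // /FF.
  have := tn_ge t St i Hi; have := sd_le i => h1 h2; nlia.
by rewrite E inordK ?ltnS ?tn_lt // /tn inord_val.
Qed.

End Sorted.

Lemma stepD : #|[set y : {ffun 'I_n -> 'I_a} | std y == sg]| = 'C(m.+1, n).
Proof.
rewrite -card_ltn_sorted_tuples.
apply: (@card_bij _ _ _ _ PhiD PsiD).
- by move=> y /D1 C; apply: PhiD_sorted.
- by move=> t /sortedE St; apply/D1; apply: PsiD_cond.
- by move=> y /D1 C; apply: PhiDK.
- by move=> t /sortedE St; apply: PsiDK.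
Qed.

End StepD.

Local Open Scope ring_scope.

Lemma cnt1 n i j : cnt n 1 i j = (i == j)%N.
Proof.
rewrite /cnt.
have E (x : {ffun 'I_n -> 'I_1}) : (\sum_(k < n) val (x k) = 0)%N.
  by apply: big1 => k _; case: (x k) => [[]].
case: eqP => [<-|ne] /=.
  rewrite -[RHS](_ : #|[set: {ffun 'I_n -> 'I_1}]| = 1%N); last by rewrite cardsT card_ffun card_ord exp1n.
  by apply: eq_card => x; rewrite !inE E addn0 divn1 eqxx.
apply: eq_card0 => x; rewrite inE E addn0 divn1; exact/eqP.
Qed.

Lemma stepA n b r i j : (0 < b)%N -> (i < n)%N ->
  carriesPr n b r i j = (cnt n (b ^ r) i j)%:R / ((b ^ r) ^ n)%:R.
Proof.
move=> Hb Hi; elim: r j => [|r IH] j /=.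
  by rewrite expn0 cnt1 exp1n divr1.
rewrite expnSr stepA_nat ?expn_gt0 ?Hb // natr_sum expnMn natrM invfM mulr_suml.
apply: eq_bigr => k _; rewrite IH /carriesP natrM.
by rewrite mulrACA.
Qed.

Lemma gbinom_nat (m k : nat) : gbinom m%:Z k = ('C(m, k))%:R.
Proof.
rewrite /gbinom lez_nat; case: leqP => H; first by rewrite absz_nat.
by rewrite bin_small.
Qed.

Theorem theorem1p1 (n b r j : nat) :
  (2 <= n)%N -> (2 <= b)%N -> (j < n)%N ->
  carriesPr n b r 0 j = \sum_(s : 'S_n | descents s == j) shuffleQ (b ^ r)%N s.
Proof.
move=> Hn Hb Hj; case: n Hn Hj => [//|n'] _ Hj.
have Hb0 : (0 < b)%N by apply: leq_trans Hb.
rewrite stepA //.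
have [a' Ea] : exists a', (b ^ r)%N = a'.+1.
  by exists (b ^ r).-1; rewrite prednK // expn_gt0 Hb0.
rewrite Ea (stepB _ _ (ltn0Sn a')) stepC natr_sum mulr_suml.
apply: eq_bigr => s _; rewrite stepD /shuffleQ; congr (_ / _).
have Hd := dd_le n' s.
have E : (n'.+1 + a'.+1 = (a' + n' - dd n' s).+1 + dd n' s + 1)%N.
  by nlia.
rewrite E !PoszD (_ : descents s^-1 = dd n' s) // (addrAC _ 1%:Z) addrK addrK gbinom_nat.
by [].
Qed.
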